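(* Let $K$ be a field with pairwise commuting derivations $\frac{d}{dx_1},\dots,\frac{d}{dx_k}$ and field of constants $C$. Then $$C(\partial_1,\dots,\partial_k)=\{x\in K(\partial_1,\dots,\partial_k)\mid x\partial_j=\partial_jx\ \text{for all }1\le j\le k\}.$$
   Context: $C=\{f\in K\mid \frac{d}{dx_i}f=0\ \forall i\}$. $K[\partial_1,\dots,\partial_k]$ is the ring of differential polynomials with usual addition and multiplication determined by $\partial_i\partial_j=\partial_j\partial_i$ and $\partial_ia=a\partial_i+\frac{d}{dx_i}(a)$ for $a\in K$; it satisfies the left Ore condition and $K(\partial_1,\dots,\partial_k)$ is its left division ring of fractions. $C(\partial_1,\dots,\partial_k)$ denotes the sub-division ring of $K(\partial_1,\dots,\partial_k)$ consisting of left fractions of elements of $C[\partial_1,\dots,\partial_k]$ (a commutative field, isomorphic to the rational function field over $C$ in $k$ variables). *)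

(* Defs.v *)
From HB Require Import structures.
From mathcomp Require Import all_boot all_order all_algebra.
From mathcomp Require Export mpoly.
Set Implicit Arguments. Unset Strict Implicit. Unset Printing Implicit Defensive.
Import GRing.Theory.
Local Open Scope ring_scope.

Definition is_derivation (K : fieldType) (d : K -> K) : Prop :=
  (forall a b, d (a + b) = d a + d b) /\ (forall a b, d (a * b) = d a * b + a * d b).

Definition commuting_derivations (K : fieldType) (k : nat) (delta : 'I_k -> K -> K) : Prop :=
  (forall i, is_derivation (delta i)) /\
  (forall i j a, delta i (delta j a) = delta j (delta i a)).

Definition is_const (K : fieldType) (k : nat) (delta : 'I_k -> K -> K) (a : K) : Prop :=
  forall i, delta i a = 0.

Definition is_division_ring (D : unitRingType) : Prop :=
  forall x : D, x != 0 -> x \is a GRing.unit.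

Definition dmon (D : unitRingType) (k : nat) (d : 'I_k -> D) (m : 'X_{1..k}) : D :=
  \prod_(i < k) d i ^+ m i.

(* the element  sum_m iota(p_m) d^m  of D: the differential polynomial with
   (left) coefficients given by p, realised inside D *)
Definition dpoly (K : fieldType) (D : unitRingType) (k : nat) (iota : K -> D)
  (d : 'I_k -> D) (p : {mpoly K[k]}) : D :=
  \sum_(m <- msupp p) iota (p@_m) * dmon d m.

(* (D, iota, d) realises the left division ring of fractions K(d_1..d_k) of the
   ring of differential polynomials K[d_1..d_k]:
   - D is a division ring, iota : K -> D a ring embedding;
   - d_i d_j = d_j d_i and d_i a = a d_i + (d/dx_i) a  for a in K;
   - the monomials d^m are left K-linearly independent (so the subring
     generated is exactly K[d_1..d_k]);
   - every element of D is a left fraction s^-1 r with r, s in K[d], s <> 0. *)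
Definition left_diff_fraction_field (K : fieldType) (k : nat)
  (delta : 'I_k -> K -> K) (D : unitRingType) (iota : {rmorphism K -> D})
  (d : 'I_k -> D) : Prop :=
  [/\ is_division_ring D,
      (forall i j, d i * d j = d j * d i),
      (forall i a, d i * iota a = iota a * d i + iota (delta i a)),
      injective (dpoly iota d) &
      (forall x : D, exists s r : {mpoly K[k]},
          s != 0 /\ x = (dpoly iota d s)^-1 * dpoly iota d r)].

Definition const_coef (K : fieldType) (k : nat) (delta : 'I_k -> K -> K)
  (p : {mpoly K[k]}) : Prop :=
  forall m, is_const delta (p@_m).

(* Main.v *)
Require Import Defs.
From HB Require Import structures.
From mathcomp Require Import all_boot all_order all_algebra.
From mathcomp Require Import mpoly.
Import GRing.Theory.
Local Open Scope ring_scope.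
Set Implicit Arguments. Unset Strict Implicit.

Lemma dpoly_ext (K : fieldType) (D : unitRingType) (k : nat) (iota : {rmorphism K -> D})
  (d : 'I_k -> D) (p : {mpoly K[k]}) (s : seq 'X_{1..k}) :
  uniq s -> {subset msupp p <= s} ->
  dpoly iota d p = \sum_(m <- s) iota (p@_m) * dmon d m.
Proof.
move=> us sub; rewrite /dpoly.
transitivity (\sum_(m <- s | m \in msupp p) iota p@_m * dmon d m).
  rewrite -[RHS]big_filter; apply: perm_big.
  apply: uniq_perm; first exact: msupp_uniq.
    exact: filter_uniq.
  by move=> m; rewrite mem_filter; case: (boolP (m \in msupp p)) => // /sub ->.
rewrite big_mkcond /=; apply: eq_bigr => m _.
case: ifP => //; rewrite mcoeff_msupp => /negbFE/eqP ->.
by rewrite rmorph0 mul0r.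
Qed.

Lemma coef_sumX (K : fieldType) (k : nat) (s : seq 'X_{1..k}) (f : 'X_{1..k} -> K) m0 :
  uniq s -> (\sum_(m <- s) f m *: ('X_[m] : {mpoly K[k]}))@_m0 = if m0 \in s then f m0 else 0.
Proof.
elim: s => [|m s IH] /=; first by rewrite big_nil mcoeff0.
case/andP=> mns us; rewrite big_cons mcoeffD mcoeffZ mcoeffX IH // in_cons.
case: (eqVneq m m0) => [<-|ne]; first by rewrite (negbTE mns) mulr1 addr0.
by rewrite mulr0 add0r.
Qed.

Definition mder (K : fieldType) (k : nat) (dl : K -> K) (p : {mpoly K[k]}) : {mpoly K[k]} :=
  \sum_(m <- msupp p) dl (p@_m) *: 'X_[m].

Lemma der0 (K : fieldType) (dl : K -> K) : is_derivation dl -> dl 0 = 0.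
Proof. by case=> hA _; apply: (addrI (dl 0)); rewrite -hA !addr0. Qed.

Lemma der1 (K : fieldType) (dl : K -> K) : is_derivation dl -> dl 1 = 0.
Proof.
case=> _ hM; have h := hM 1 1; rewrite !mulr1 mul1r in h.
by apply: (addrI (dl 1)); rewrite addr0 -h.
Qed.

Lemma mder_coef (K : fieldType) (k : nat) (dl : K -> K) (p : {mpoly K[k]}) m :
  is_derivation dl -> (mder dl p)@_m = dl (p@_m).
Proof.
move=> hd; rewrite /mder coef_sumX ?msupp_uniq // mcoeff_msupp.
by case: eqP => // ->; rewrite der0.
Qed.

Lemma dmon_comm (D : unitRingType) (k : nat) (d : 'I_k -> D) j m :
  (forall i j, d i * d j = d j * d i) -> d j * dmon d m = dmon d m * d j.
Proof.
move=> hc; rewrite /dmon; apply: commr_prod => i _; apply: commrX; exact: hc.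
Qed.

Lemma dpoly_mder (K : fieldType) (k : nat) (delta : 'I_k -> K -> K)
  (D : unitRingType) (iota : {rmorphism K -> D}) (d : 'I_k -> D) j p :
  is_derivation (delta j) ->
  (forall i j, d i * d j = d j * d i) ->
  (forall i a, d i * iota a = iota a * d i + iota (delta i a)) ->
  d j * dpoly iota d p = dpoly iota d p * d j + dpoly iota d (mder (delta j) p).
Proof.
move=> hd hc hl.
rewrite (@dpoly_ext _ _ _ iota d (mder (delta j) p) (msupp p)) ?msupp_uniq //; last first.
  by move=> m; rewrite !mcoeff_msupp mder_coef //; apply: contraNN => /eqP ->; rewrite der0.
rewrite /dpoly big_distrr big_distrl -big_split /=; apply: eq_bigr => m _.
by rewrite mulrA hl mulrDl -!mulrA dmon_comm // mder_coef.
Qed.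

Lemma dpolyZ (K : fieldType) (k : nat) (D : unitRingType) (iota : {rmorphism K -> D})
  (d : 'I_k -> D) a p : dpoly iota d (a *: p) = iota a * dpoly iota d p.
Proof.
rewrite (@dpoly_ext _ _ _ iota d (a *: p) (msupp p)) ?msupp_uniq //; last exact: msuppZ_le.
rewrite /dpoly big_distrr; apply: eq_bigr => m _.
by rewrite /= mcoeffZ rmorphM mulrA.
Qed.

Lemma dpoly0 (K : fieldType) (k : nat) (D : unitRingType) (iota : {rmorphism K -> D})
  (d : 'I_k -> D) : dpoly iota d 0 = 0.
Proof. by rewrite /dpoly msupp0 big_nil. Qed.

Lemma dpoly_const (K : fieldType) (k : nat) (delta : 'I_k -> K -> K)
  (D : unitRingType) (iota : {rmorphism K -> D}) (d : 'I_k -> D) j p :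
  is_derivation (delta j) ->
  (forall i j, d i * d j = d j * d i) ->
  (forall i a, d i * iota a = iota a * d i + iota (delta i a)) ->
  const_coef delta p -> d j * dpoly iota d p = dpoly iota d p * d j.
Proof.
move=> hd hc hl cp; rewrite (dpoly_mder p hd hc hl).
have -> : mder (delta j) p = 0 by apply/mpolyP => m; rewrite mder_coef // cp mcoeff0.
by rewrite dpoly0 addr0.
Qed.

Lemma minimal_elt (K : fieldType) (k : nat) (delta : 'I_k -> K -> K)
  (D : unitRingType) (iota : {rmorphism K -> D}) (d : 'I_k -> D) (x : D) :
  commuting_derivations delta ->
  left_diff_fraction_field delta iota d ->
  (forall j, x * d j = d j * x) ->
  forall n (s : {mpoly K[k]}), (size (msupp s) <= n)%N -> s != 0 ->
  (exists q, dpoly iota d s * x = dpoly iota d q) ->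
  exists s', [/\ s' != 0, const_coef delta s' & exists q, dpoly iota d s' * x = dpoly iota d q].
Proof.
move=> [hder hdc] [hdiv hc hl hinj hfr] hx; elim=> [|n IH] s.
  by rewrite leqn0 size_eq0 msupp_eq0 => /eqP ->; rewrite eqxx.
move=> hs s0 [q hq].
have: msupp s != [::] by rewrite msupp_eq0.
case E: (msupp s) => [|m0 rest] // _.
have m0s : m0 \in msupp s by rewrite E mem_head.
have c0 : s@_m0 != 0 by rewrite -mcoeff_msupp.
set s1 := (s@_m0)^-1 *: s.
have s1m0 : s1@_m0 = 1 by rewrite mcoeffZ mulVf.
have sub1 : {subset msupp s1 <= msupp s} := @msuppZ_le _ _ _ s.
set Q := (s@_m0)^-1 *: q.
have hq1 : dpoly iota d s1 * x = dpoly iota d Q by rewrite !dpolyZ -mulrA hq.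
have s10 : s1 != 0.
  by apply/eqP => h; move: s1m0; rewrite h mcoeff0 => /eqP; rewrite eq_sym oner_eq0.
case: (boolP [forall j, mder (delta j) s1 == 0]) => [/forallP allz | ].
  exists s1; split => //; last by exists Q.
  by move=> m j; rewrite -mder_coef // (eqP (allz j)) mcoeff0.
rewrite negb_forall => /existsP [j hj].
apply: (IH (mder (delta j) s1)) => //.
  have nm0 : m0 \notin msupp (mder (delta j) s1).
    by rewrite mcoeff_msupp mder_coef // s1m0 der1 // eqxx.
  have := @uniq_leq_size _ (m0 :: msupp (mder (delta j) s1)) (msupp s).
  rewrite /= nm0 msupp_uniq /= => /(_ isT) h.
  rewrite -ltnS; apply: leq_trans hs; apply: h => m; rewrite in_cons.
  case/orP => [/eqP -> // | hm]; apply: sub1; move: hm.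
  by rewrite !mcoeff_msupp mder_coef //; apply: contraNN => /eqP ->; rewrite der0.
exists (mder (delta j) Q).
have E1 : forall p, dpoly iota d (mder (delta j) p) = d j * dpoly iota d p - dpoly iota d p * d j.
  by move=> p; rewrite (dpoly_mder p (hder j) hc hl) addrAC subrr add0r.
by rewrite !E1 mulrBl -!mulrA -hx hq1 mulrA hq1.
Qed.

Unset Implicit Arguments. Set Strict Implicit.

Theorem mainTheorem18 (K : fieldType) (k : nat) (delta : 'I_k -> K -> K)
  (D : unitRingType) (iota : {rmorphism K -> D}) (d : 'I_k -> D) :
  commuting_derivations delta ->
  left_diff_fraction_field delta iota d ->
  forall x : D,
    (exists s r : {mpoly K[k]},
        [/\ const_coef delta s, const_coef delta r, s != 0 &
            x = (dpoly iota d s)^-1 * dpoly iota d r])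
    <-> (forall j : 'I_k, x * d j = d j * x).
Proof.
move=> hcd hlf x; have [hder hdc] := hcd; have [hdiv hc hl hinj hfr] := hlf.
have unit : forall s : {mpoly K[k]}, s != 0 -> dpoly iota d s \is a GRing.unit.
  move=> s s0; apply: hdiv; apply/eqP => h; move/eqP: s0; apply.
  by apply: hinj; rewrite h dpoly0.
split.
  case=> s [r [cs cr s0 ->]] j.
  have uS := unit s s0.
  have hS := dpoly_const (hder j) hc hl cs.
  have hR := dpoly_const (hder j) hc hl cr.
  set S := dpoly iota d s in uS hS *; set R := dpoly iota d r in hR *.
  have e : S^-1 * d j = d j * S^-1.
    rewrite -[LHS](mulrK uS) -(mulrA S^-1 (d j) S) hS mulrA mulVr // mul1r.
    done.
  by rewrite -mulrA -hR mulrA e -mulrA.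
move=> hx.
have [s [r [s0 ex]]] := hfr x.
have [s' [s'0 cs' [q hq]]] := minimal_elt hcd hlf hx (leqnn _) s0
   (ex_intro _ r (etrans (congr1 _ ex) (etrans (mulrA _ _ _) (etrans (congr1 (fun z => z * _) (mulrV (unit s s0))) (mul1r _))))).
exists s', q; split => //; last by rewrite -hq mulKr // unit.
move=> m i.
have hS := dpoly_const (hder i) hc hl cs'.
have := dpoly_mder q (hder i) hc hl.
rewrite -hq mulrA hS -(mulrA (dpoly iota d s')) -hx mulrA => h.
have h0 : dpoly iota d (mder (delta i) q) = 0.
  by apply: (addrI (dpoly iota d s' * x * d i)); rewrite addr0 -h.
have : mder (delta i) q = 0 by apply: hinj; rewrite h0 dpoly0.
by move/(congr1 (mcoeff m)); rewrite mder_coef // mcoeff0.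
Qed.
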